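(* Let $I,J$ be finite sets, $\omega:\mathbb{R}^I\to\mathbb{R}^I$ a nonsingular linear map, $\Lambda:\mathbb{R}^J\to\mathbb{R}^I$ a linear injection, $\iota:\mathbb{R}^J\to\mathbb{R}^J$ a linear bijection and $\vartheta:\mathbb{R}^J\to\mathbb{R}^J$ a symmetric positive definite linear map. On $\mathbb{R}^J\oplus\mathbb{R}^I\oplus\mathbb{R}^I$ define $$A=\begin{pmatrix}-\tfrac12\iota\iota^* & -\Lambda^* & 0\\ \Lambda & 0 & -\omega^*\\ 0 & \omega & 0\end{pmatrix},\qquad B=\begin{pmatrix}\iota\\0\\0\end{pmatrix}\vartheta^{1/2}.$$ If the pair $(\omega^*\omega,\Lambda)$ satisfies the Kalman condition, then the pair $(A,B)$ satisfies the Kalman condition.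
   Context: A pair $(M,N)$ of linear maps $M:\mathbb{R}^m\to\mathbb{R}^m$, $N:\mathbb{R}^k\to\mathbb{R}^m$ satisfies the Kalman condition if the ranges of $N, MN, M^2N, \dots$ together span $\mathbb{R}^m$. Stars denote transposes (adjoints for the standard inner products). *)

(* Defs.v *)
From HB Require Import structures.
From mathcomp Require Import all_boot all_order all_algebra.
Set Implicit Arguments. Unset Strict Implicit. Unset Printing Implicit Defensive.
Import Order.TTheory GRing.Theory Num.Theory.
Local Open Scope ring_scope.

(* Linear maps are matrices acting on column vectors: x |-> M *m x.
   Adjoints (stars) are transposes. *)

(* Kalman condition: the ranges (column spaces) of N, MN, M^2N, ... together
   span R^m; i.e. every vector x lies in the span of the column spaces of
   M^i N for i < d, for some d.  Column space of X = row space of X^T. *)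
Definition kalman (R : fieldType) (m k : nat) (M : 'M[R]_m) (N : 'M[R]_(m, k)) : Prop :=
  forall x : 'cV[R]_m, exists d : nat,
    (x^T <= \sum_(i < d) <<(M ^+ i *m N)^T>>)%MS.

Definition sym_posdef (R : realFieldType) (n : nat) (S : 'M[R]_n) : Prop :=
  S^T = S /\ forall v : 'cV[R]_n, v != 0 -> 0 < (v^T *m S *m v) 0 0.

Definition Ablock (R : realFieldType) (nI nJ : nat)
  (om : 'M[R]_nI) (La : 'M[R]_(nI, nJ)) (io : 'M[R]_nJ) : 'M[R]_(nJ + (nI + nI)) :=
  block_mx (- (2%:R^-1) *: (io *m io^T)) (row_mx (- La^T) 0)
           (col_mx La 0) (block_mx 0 (- om^T) om 0).

(* B = (iota; 0; 0) * theta^{1/2}, with sqrtT the square root of theta *)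
Definition Bblock (R : realFieldType) (nI nJ : nat)
  (io : 'M[R]_nJ) (sqrtT : 'M[R]_nJ) : 'M[R]_(nJ + (nI + nI), nJ) :=
  col_mx io (0 : 'M[R]_(nI + nI, nJ)) *m sqrtT.

(* Main.v *)
Require Import Defs.
From HB Require Import structures.
From mathcomp Require Import all_boot all_order all_algebra.
Import Order.TTheory GRing.Theory Num.Theory.
Local Open Scope ring_scope.

Set Implicit Arguments.
Section Gen.
Variables (F : fieldType) (n k : nat) (A : 'M[F]_n) (B : 'M[F]_(n, k)).

Definition Kd d := (\sum_(i < d) <<(A ^+ i *m B)^T>>)%MS.
Definition Pr (v : 'cV[F]_n) := exists d, (v^T <= Kd d)%MS.

Lemma Kd_mono {d e} : (d <= e)%N -> (Kd d <= Kd e)%MS.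
Proof.
move=> de; apply/sumsmx_subP => i _.
by apply: (sumsmx_sup (widen_ord de i)).
Qed.

Lemma Pr_add a b : Pr a -> Pr b -> Pr (a + b).
Proof.
move=> [d1 H1] [d2 H2]; exists (maxn d1 d2); rewrite linearD /=.
apply: addmx_sub.
  by apply: submx_trans H1 (Kd_mono (leq_maxl _ _)).
by apply: submx_trans H2 (Kd_mono (leq_maxr _ _)).
Qed.

Lemma Pr_scale c a : Pr a -> Pr (c *: a).
Proof. by move=> [d H]; exists d; rewrite linearZ /=; apply: scalemx_sub. Qed.

Lemma Pr_opp a : Pr a -> Pr (- a).
Proof. by move=> H; rewrite -scaleN1r; apply: Pr_scale. Qed.

Lemma Pr_sub a b : Pr a -> Pr b -> Pr (a - b).
Proof. by move=> Ha Hb; apply: Pr_add => //; apply: Pr_opp. Qed.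

Lemma Pr_A a : Pr a -> Pr (A *m a).
Proof.
move=> [d /sub_sumsmxP [u Hu]]; exists d.+1.
rewrite trmx_mul Hu mulmx_suml; apply: summx_sub => i _.
rewrite -mulmxA; apply: submx_trans (submxMl _ _) _.
rewrite (eqmxMr _ (genmxE _)).
rewrite -trmx_mul mulmxA -[A *m A ^+ i]/(A * A ^+ i) -exprS.
apply: (sumsmx_sup (lift ord0 i)) => //.
by rewrite genmxE.
Qed.

Lemma Pr_B w : Pr (B *m w).
Proof.
exists 1%N; rewrite trmx_mul; apply: submx_trans (submxMl _ _) _.
apply: (sumsmx_sup ord0) => //.
by rewrite genmxE expr0 mul1mx.
Qed.

Lemma kalman_ind (Q : 'cV[F]_n -> Prop) :
  kalman A B -> Q 0 -> (forall a b, Q a -> Q b -> Q (a + b)) ->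
  (forall i w, Q (A ^+ i *m B *m w)) -> forall x, Q x.
Proof.
move=> K Q0 QD QB x; have [d /sub_sumsmxP [u Hu]] := K x.
rewrite -(trmxK x) Hu raddf_sum /=.
apply: (big_ind Q) => // i _.
have Hs : (u i *m <<(A ^+ i *m B)^T>> <= (A ^+ i *m B)^T)%MS.
  by apply: submx_trans (submxMl _ _) _; rewrite genmxE.
rewrite -(mulmxKpV Hs) trmx_mul trmxK; exact: QB.
Qed.

End Gen.
Unset Implicit Arguments.
Arguments Pr {F n k}.
Arguments Kd {F n k}.

Lemma Pr0 {F : fieldType} {n k} (A : 'M[F]_n) (B : 'M[F]_(n,k)) : Pr A B 0.
Proof. by exists 0%N; rewrite trmx0 sub0mx. Qed.

Theorem mainTheorem10 (R : realFieldType) (nI nJ : nat)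
  (om : 'M[R]_nI) (La : 'M[R]_(nI, nJ)) (io th sqrtT : 'M[R]_nJ) :
  om \in unitmx ->
  (forall x : 'cV[R]_nJ, La *m x = 0 -> x = 0) ->
  io \in unitmx ->
  sym_posdef th ->
  (* sqrtT = theta^{1/2}: the symmetric positive definite square root *)
  sym_posdef sqrtT -> sqrtT *m sqrtT = th ->
  kalman (om^T *m om) La ->
  kalman (Ablock om La io) (Bblock nI io sqrtT).
Proof.
move=> omU _ ioU _ [sT sP] _ K.
set A := Ablock om La io; set B := Bblock nI io sqrtT.
have sU : sqrtT \in unitmx.
  rewrite unitmxE unitfE; apply/negP => /det0P [v vn0 vs].
  have := sP v^T; rewrite trmxK vs mul0mx mxE ltxx => H.
  suff : false by []; apply: H.
  by rewrite -trmx0 (inj_eq trmx_inj).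
have U : forall u, Pr A B (col_mx u 0).
  move=> u; have iU : io *m sqrtT \in unitmx by rewrite unitmx_mul ioU sU.
  have -> : col_mx u (0 : 'M_(nI + nI, 1)) = B *m (invmx (io *m sqrtT) *m u).
    by rewrite /B /Bblock mul_col_mx mul0mx mul_col_mx mul0mx mulKVmx.
  exact: Pr_B.
have AY : forall y : 'cV[R]_nI, A *m col_mx 0 (col_mx y 0) = col_mx (- La^T *m y) (col_mx 0 (om *m y)).
  move=> y; rewrite /A /Ablock mul_block_col mul_row_col mul_block_col.
  by rewrite ?mulmx0 ?mul0mx ?addr0 ?add0r ?col_mx0.
have AZ : forall z : 'cV[R]_nI, A *m col_mx 0 (col_mx 0 z) = col_mx 0 (col_mx (- om^T *m z) 0).
  move=> z; rewrite /A /Ablock mul_block_col mul_row_col mul_block_col.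
  by rewrite ?mulmx0 ?mul0mx ?addr0 ?add0r ?col_mx0.
have AU : forall u : 'cV[R]_nJ, A *m col_mx u 0 =
    col_mx (- (2%:R^-1) *: (io *m io^T) *m u) (col_mx (La *m u) 0).
  move=> u; rewrite /A /Ablock mul_block_col mul_col_mx.
  by rewrite ?mulmx0 ?mul0mx ?addr0 ?add0r ?col_mx0.
have YZ : forall y : 'cV[R]_nI, Pr A B (col_mx 0 (col_mx y 0)) -> Pr A B (col_mx 0 (col_mx 0 (om *m y))).
  move=> y Hy; have := Pr_sub (Pr_A Hy) (U (- La^T *m y)).
  by rewrite AY opp_col_mx add_col_mx subrr oppr0 addr0.
have ZY : forall z : 'cV[R]_nI, Pr A B (col_mx 0 (col_mx 0 z)) -> Pr A B (col_mx 0 (col_mx (om^T *m z) 0)).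
  move=> z Hz; have := Pr_opp (Pr_A Hz).
  by rewrite AZ !opp_col_mx !oppr0 mulNmx opprK.
have Y0 : forall u : 'cV[R]_nJ, Pr A B (col_mx 0 (col_mx (La *m u) 0)).
  move=> u; have := Pr_sub (Pr_A (U u)) (U (- (2%:R^-1) *: (io *m io^T) *m u)).
  by rewrite AU opp_col_mx add_col_mx subrr oppr0 addr0.
have Yall : forall y : 'cV[R]_nI, Pr A B (col_mx 0 (col_mx y 0)).
  apply: (kalman_ind (fun y => Pr A B (col_mx 0 (col_mx y 0))) K).
  - by rewrite !col_mx0; apply: Pr0.
  - by move=> a b Ha Hb; have := Pr_add Ha Hb; rewrite !add_col_mx !addr0.
  move=> i w; elim: i => [|i IH]; first by rewrite expr0 mul1mx; apply: Y0.
  have -> : (om^T *m om) ^+ i.+1 *m La *m w = om^T *m (om *m ((om^T *m om) ^+ i *m La *m w)).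
    by rewrite exprS -mulmxE !mulmxA.
  exact: ZY (YZ _ IH).
have Zall : forall z : 'cV[R]_nI, Pr A B (col_mx 0 (col_mx 0 z)).
  by move=> z; rewrite -(mulKVmx omU z); apply: YZ.
move=> x; suff : Pr A B x by [].
rewrite -(vsubmxK x) -(vsubmxK (dsubmx x)).
set u := usubmx x; set y := usubmx (dsubmx x); set z := dsubmx (dsubmx x).
have -> : col_mx u (col_mx y z) = col_mx u 0 + col_mx 0 (col_mx y 0) + col_mx 0 (col_mx 0 z).
  by rewrite !(add_col_mx, addr0, add0r).
by apply: Pr_add; [apply: Pr_add|].
Qed.
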